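(* Let $|\cdot|$ be a measurable norm on a separable, infinite-dimensional, real Hilbert space $H$, and let $M_0\subset H$ be a closed subspace with $\dim M_0=\infty$. Then there is a measurably adapted sequence $(F_n)_{n\geq1}$ of closed subspaces of $H$ with $F_1\supset F_0:=M_0^\perp$ and $\dim(F_1\cap M_0)<\infty$. Moreover, the linear span of the subspaces $F_n\cap F_{n-1}^\perp$, $n\geq 1$, is dense in $M_0$.
   Context: A norm $|\cdot|$ on a real separable Hilbert space $H$ is a measurable norm if for every $\epsilon>0$ there is a finite-dimensional subspace $F_0\subset H$ such that $\mathrm{Gauss}[v\in F_1: |v|>\epsilon]<\epsilon$ for every finite-dimensional subspace $F_1\subset H$ orthogonal to $F_0$, where $\mathrm{Gauss}$ is standard Gaussian measure on $F_1$. A sequence $(F_n)_{n\geq1}$ of closed subspaces of $H$ is measurably adapted if: (i) $F_1\subset F_2\subset\cdots$; (ii) $1\leq\dim(F_{n+1}\cap F_n^\perp)<\infty$ for all $n\ge1$; (iii) $\bigcup_n F_n$ is dense in $H$; (iv) for every $n\ge1$, $\mathrm{Gauss}[v\in F_{n+1}\cap F_n^\perp: |v|>2^{-n}]<2^{-n}$, with $\mathrm{Gauss}$ the standard Gaussian measure on $F_{n+1}\cap F_n^\perp$. *)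

(* Defs.v *)
From HB Require Import structures.
From mathcomp Require Import all_boot all_order all_algebra.
From mathcomp Require Import all_classical all_reals all_analysis.
Set Implicit Arguments. Unset Strict Implicit. Unset Printing Implicit Defensive.
Import Order.TTheory GRing.Theory Num.Theory.
Import numFieldNormedType.Exports.
Local Open Scope classical_set_scope.
Local Open Scope ring_scope.

Section HilbertDefs.
Context {R : realType} {H : normedModType R}.

Definition is_inner_product (ip : H -> H -> R) :=
  [/\ (forall x y, ip x y = ip y x),
      (forall (a : R) x y z, ip (a *: x + y) z = a * ip x z + ip y z),
      (forall x, 0 <= ip x x) &
      (forall x, `|x| = Num.sqrt (ip x x))].

(* a norm on H (a priori unrelated to the Hilbert norm) *)
Definition is_norm (N : H -> R) :=
  [/\ (forall x y, N (x + y) <= N x + N y),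
      (forall (a : R) x, N (a *: x) = `|a| * N x) &
      (forall x, N x = 0 -> x = 0)].

Definition separable := exists D : set H, countable D /\ closure D = setT.

Definition lspan (S : set H) : set H :=
  [set x | exists n (v : 'I_n -> H) (c : 'I_n -> R),
     (forall i, S (v i)) /\ x = \sum_(i < n) c i *: v i].

Definition subspace (S : set H) :=
  [/\ S 0, (forall x y, S x -> S y -> S (x + y)) &
      (forall (a : R) x, S x -> S (a *: x))].

Definition closed_subspace (S : set H) := subspace S /\ closed S.

Definition finite_dim (S : set H) := exists s : seq H, S `<=` lspan [set x | x \in s].

Definition infinite_dim (S : set H) := ~ finite_dim S.

Definition perp (ip : H -> H -> R) (S : set H) : set H :=
  [set x | forall y, S y -> ip x y = 0].

Definition orthogonal (ip : H -> H -> R) (S T : set H) :=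
  forall x y, S x -> T y -> ip x y = 0.

Definition onb (ip : H -> H -> R) (S : set H) (es : seq H) :=
  (forall i j, (i < size es)%N -> (j < size es)%N ->
     ip (nth 0 es i) (nth 0 es j) = (i == j)%:R) /\
  lspan [set x | x \in es] = S.

(* iterated integral of f (x_1 e_1 + ... + x_k e_k) against the standard
   Gaussian density in each coordinate x_i *)
Fixpoint gaussE (es : seq H) (f : H -> \bar R) : \bar R :=
  match es with
  | [::] => f 0
  | e :: es' => integral (@lebesgue_measure R) setT (fun x : R =>
                  ((normal_pdf 0 1 x)%:E * gaussE es' (fun v => f (x *: e + v)%R))%E)
  end.

(* standard Gaussian measure of A on the finite-dimensional subspace F,
   computed in an (arbitrarily chosen) orthonormal basis of F *)
Definition Gauss (ip : H -> H -> R) (F : set H) (A : set H) : \bar R :=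
  gaussE (xget [::] (onb ip F)) (fun v => (\1_(A `&` F) v)%:E).

Definition measurable_norm (ip : H -> H -> R) (N : H -> R) :=
  is_norm N /\
  forall eps : R, 0 < eps -> exists F0 : set H,
    subspace F0 /\ finite_dim F0 /\
    forall F1 : set H, subspace F1 -> finite_dim F1 -> orthogonal ip F1 F0 ->
      (Gauss ip F1 [set v | (N v > eps)%R] < eps%:E)%E.

(* F n, for n >= 1, is a measurably adapted sequence (F 0 is not part of it) *)
Definition measurably_adapted (ip : H -> H -> R) (N : H -> R) (F : nat -> set H) :=
  [/\ (forall n, (1 <= n)%N -> closed_subspace (F n)),
      (forall n, (1 <= n)%N -> F n `<=` F n.+1),
      (forall n, (1 <= n)%N ->
         (exists x, F n.+1 x /\ perp ip (F n) x /\ x != 0) /\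
         finite_dim (F n.+1 `&` perp ip (F n))),
      closure (\bigcup_(n in [set n | (1 <= n)%N]) F n) = setT &
      (forall n, (1 <= n)%N ->
         (Gauss ip (F n.+1 `&` perp ip (F n)) [set v | (N v > 2 ^- n)%R]
            < (2 ^- n : R)%:E)%E)].

End HilbertDefs.

(* Main.v *)
Require Import Defs.
From HB Require Import structures.
From mathcomp Require Import all_boot all_order all_algebra.
From mathcomp Require Import all_classical all_reals all_analysis.
From mathcomp Require Import ring lra zify.
Import Order.TTheory GRing.Theory Num.Theory.
Import numFieldNormedType.Exports.
Local Open Scope classical_set_scope.
Local Open Scope ring_scope.
Section Basics.
Variables (R : realType) (H : completeNormedModType R) (ip : H -> H -> R).
Hypothesis hip : is_inner_product ip.

Lemma ipC x y : ip x y = ip y x. Proof. by case: hip. Qed.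
Lemma ipL a x y z : ip (a *: x + y) z = a * ip x z + ip y z. Proof. by case: hip. Qed.
Lemma ip_ge0 x : 0 <= ip x x. Proof. by case: hip. Qed.
Lemma ip_norm x : `|x| = Num.sqrt (ip x x). Proof. by case: hip. Qed.

Lemma ip0l z : ip 0 z = 0.
Proof. have := ipL 1 0 0 z; rewrite scale1r !addr0 mul1r => h. lra. Qed.
Lemma ipDl x y z : ip (x + y) z = ip x z + ip y z.
Proof. by rewrite -[x in LHS]scale1r ipL mul1r. Qed.
Lemma ipZl a x z : ip (a *: x) z = a * ip x z.
Proof. by rewrite -[_ *: _]addr0 ipL ip0l addr0. Qed.
Lemma ipNl x z : ip (- x) z = - ip x z.
Proof. by rewrite -scaleN1r ipZl mulN1r. Qed.
Lemma ipBl x y z : ip (x - y) z = ip x z - ip y z.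
Proof. by rewrite ipDl ipNl. Qed.
Lemma ip0r z : ip z 0 = 0. Proof. by rewrite ipC ip0l. Qed.
Lemma ipDr x y z : ip z (x + y) = ip z x + ip z y.
Proof. by rewrite ipC ipDl !(ipC z). Qed.
Lemma ipZr a x z : ip z (a *: x) = a * ip z x.
Proof. by rewrite ipC ipZl ipC. Qed.
Lemma ipNr x z : ip z (- x) = - ip z x.
Proof. by rewrite ipC ipNl ipC. Qed.
Lemma ipBr x y z : ip z (x - y) = ip z x - ip z y.
Proof. by rewrite ipDr ipNr. Qed.

Lemma norm2 x : `|x| ^+ 2 = ip x x.
Proof. by rewrite ip_norm sqr_sqrtr // ip_ge0. Qed.

Lemma ip_eq0 {x} : ip x x = 0 -> x = 0.
Proof. by move=> h; apply/normr0_eq0; rewrite ip_norm h sqrtr0. Qed.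

Lemma ip_suml n (c : 'I_n -> R) (v : 'I_n -> H) z :
  ip (\sum_(i < n) c i *: v i) z = \sum_(i < n) c i * ip (v i) z.
Proof.
elim: n c v => [|n IH] c v; first by rewrite !big_ord0 ip0l.
by rewrite !big_ord_recr /= ipDl ipZl IH.
Qed.

Lemma ip_sumls (L : seq H) (c : H -> R) z :
  ip (\sum_(u <- L) c u *: u) z = \sum_(u <- L) c u * ip u z.
Proof.
elim: L => [|u L IH]; first by rewrite !big_nil ip0l.
by rewrite !big_cons ipDl ipZl IH.
Qed.

Lemma ip_sumrs (L : seq H) (c : H -> R) z :
  ip z (\sum_(u <- L) c u *: u) = \sum_(u <- L) c u * ip z u.
Proof.
by rewrite ipC ip_sumls; apply: eq_bigr => u _; rewrite ipC.
Qed.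

Lemma CS2 x y : ip x y ^+ 2 <= ip x x * ip y y.
Proof.
have [y0|ny0] := eqVneq (ip y y) 0.
  by rewrite y0 (ip_eq0 y0) ip0r mulr0 expr0n.
have hy : 0 < ip y y by rewrite lt_neqAle eq_sym ny0 ip_ge0.
set t := ip x y / ip y y.
have := ip_ge0 (x - t *: y).
rewrite ipBl !ipBr !ipZl !ipZr (ipC y x).
have ht : t * ip y y = ip x y by rewrite /t mulfVK.
move=> h.
have h2 : 0 <= ip x x * ip y y - ip x y ^+ 2.
  have : 0 <= (ip x x - t * ip x y - (t * ip x y - t * (t * ip y y))) * ip y y.
    by apply: mulr_ge0 => //; apply: ltW.
  rewrite ht.
  have -> : (ip x x - t * ip x y - (t * ip x y - t * ip x y)) * ip y y
     = ip x x * ip y y - (t * ip y y) * ip x y by ring.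
  by rewrite ht expr2.
lra.
Qed.

Lemma CS x y : `|ip x y| <= `|x| * `|y|.
Proof.
rewrite -ler_sqr ?nnegrE ?mulr_ge0 // exprMn !norm2 real_normK ?CS2 //.
exact: num_real.
Qed.

Lemma pythag x y : ip x y = 0 -> ip (x + y) (x + y) = ip x x + ip y y.
Proof. by move=> h; rewrite ipDl !ipDr h (ipC y x) h !addr0 add0r. Qed.

Definition ortho (L : seq H) :=
  uniq L /\ forall u v, u \in L -> v \in L -> ip u v = (u == v)%:R.
Definition projL (L : seq H) x := \sum_(u <- L) ip x u *: u.
Definition Sp (L : seq H) := [set x | projL L x = x].


Lemma ip_projL L x v : ortho L -> v \in L -> ip (projL L x) v = ip x v.
Proof.
move=> [uL oL] vL; rewrite /projL ip_sumls //.
rewrite (bigD1_seq v) //= (oL v v) // eqxx mulr1 big_seq_cond big1 ?addr0 //.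
by move=> u /andP[uin uv]; rewrite (oL u v) // (negbTE uv) mulr0.
Qed.

Lemma projL_mem L v : ortho L -> v \in L -> projL L v = v.
Proof.
move=> [uL oL] vL; rewrite /projL.
rewrite (bigD1_seq v) //= (oL v v) // eqxx scale1r big_seq_cond big1 ?addr0 //.
by move=> u /andP[uin uv]; rewrite (oL v u) // eq_sym (negbTE uv) scale0r.
Qed.

Lemma projL0 L : projL L 0 = 0.
Proof. by rewrite /projL big1 // => u _; rewrite ip0l // scale0r. Qed.
Lemma projLD L x y : projL L (x + y) = projL L x + projL L y.
Proof. by rewrite /projL -big_split; apply: eq_bigr => u _; rewrite ipDl // scalerDl. Qed.
Lemma projLZ L a x : projL L (a *: x) = a *: projL L x.
Proof. by rewrite /projL scaler_sumr; apply: eq_bigr => u _; rewrite ipZl // scalerA. Qed.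
Lemma projLB L x y : projL L (x - y) = projL L x - projL L y.
Proof. by rewrite -scaleN1r projLD projLZ scaleN1r. Qed.

Lemma projL_sumI L n (c : 'I_n -> R) (v : 'I_n -> H) :
  projL L (\sum_(i < n) c i *: v i) = \sum_(i < n) c i *: projL L (v i).
Proof.
elim: n c v => [|n IH] c v; first by rewrite !big_ord0 projL0.
by rewrite !big_ord_recr /= projLD projLZ IH.
Qed.

Lemma Sp_subspace L : Defs.subspace (Sp L).
Proof.
rewrite /Defs.subspace /Sp /=; split; first exact: projL0.
  by move=> x y hx hy; rewrite projLD hx hy.
by move=> a x hx; rewrite projLZ hx.
Qed.

Lemma lspan_list (T : set H) (L : seq H) (c : H -> R) :
  (forall u, u \in L -> T u) -> lspan T (\sum_(u <- L) c u *: u).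
Proof.
move=> hL; exists (size L), (fun i => nth 0 L i), (fun i => c (nth 0 L i)).
split; first by move=> i; apply: hL; apply: mem_nth.
by rewrite (big_nth 0) big_mkord.
Qed.

Lemma Sp_lspan L : ortho L -> Sp L = lspan [set x | x \in L].
Proof.
move=> oL; apply/seteqP; split => x.
  by rewrite /Sp /= => <-; apply: lspan_list.
move=> [n [v [c [hv ->]]]]; rewrite /Sp /= projL_sumI.
by apply: eq_bigr => i _; rewrite projL_mem //; exact: hv.
Qed.

Lemma lspan_sub (S T : set H) : Defs.subspace S -> T `<=` S -> lspan T `<=` S.
Proof.
move=> [S0 SD SZ] TS x [n [v [c [hv ->]]]].
elim: n c v hv {x} => [|n IH] c v hv; first by rewrite big_ord0.
rewrite big_ord_recr /=; apply: SD; last by apply: SZ; apply: TS.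
exact: IH.
Qed.

Lemma lspan_mono (S T : set H) : S `<=` T -> lspan S `<=` lspan T.
Proof. by move=> ST x [n [v [c [hv ->]]]]; exists n, v, c; split => // i; apply: ST. Qed.

Lemma perp_lspan (T : set H) z y :
  (forall v, T v -> ip v z = 0) -> lspan T y -> ip y z = 0.
Proof.
move=> hT [n [v [c [hv ->]]]]; rewrite ip_suml //.
by rewrite big1 // => i _; rewrite hT // mulr0.
Qed.

Lemma Sp_sub (S : set H) L : ortho L -> Defs.subspace S ->
  (forall u, u \in L -> S u) -> Sp L `<=` S.
Proof. by move=> oL sS hL; rewrite Sp_lspan //; apply: lspan_sub. Qed.

Lemma ortho_catl L N : ortho (L ++ N) -> ortho L.
Proof.
move=> [u o]; split; first by move: u; rewrite cat_uniq => /and3P[].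
by move=> x y hx hy; apply: o; rewrite mem_cat ?hx ?hy.
Qed.
Lemma ortho_catr L N : ortho (L ++ N) -> ortho N.
Proof.
move=> [u o]; split; first by move: u; rewrite cat_uniq => /and3P[].
by move=> x y hx hy; apply: o; rewrite mem_cat ?hx ?hy orbT.
Qed.

Lemma ortho_cross L N u v : ortho (L ++ N) -> u \in L -> v \in N -> ip u v = 0.
Proof.
move=> [uLN o] hu hv; rewrite o ?mem_cat ?hu ?hv ?orbT //.
case: eqVneq => // e; move: uLN; rewrite cat_uniq => /and3P[_ /hasPn h _].
by move: (h v hv); rewrite -e hu.
Qed.

Lemma Sp_disj (A B : seq H) x v :
  (forall u w, u \in A -> w \in B -> ip u w = 0) -> Sp A x -> v \in B -> ip x v = 0.
Proof.
move=> h hx hv; rewrite -hx /projL ip_sumls // big_seq big1 // => u hu.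
by rewrite (h u v) // mulr0.
Qed.

Lemma SpL_N L N x v : ortho (L ++ N) -> Sp L x -> v \in N -> ip x v = 0.
Proof. by move=> o; apply: Sp_disj => u w hu hw; exact: (ortho_cross _ _ _ _ o hu hw). Qed.
Lemma SpN_L L N x v : ortho (L ++ N) -> Sp N x -> v \in L -> ip x v = 0.
Proof.
move=> o; apply: Sp_disj => u w hu hw; rewrite ipC //; exact: (ortho_cross _ _ _ _ o hw hu).
Qed.

Lemma Sp_ortho L N x y : ortho (L ++ N) -> Sp L x -> Sp N y -> ip x y = 0.
Proof.
move=> o hx hy; rewrite -hy /projL ip_sumrs // big_seq big1 // => v hv.
by rewrite (SpL_N _ _ _ _ o hx hv) mulr0.
Qed.

Lemma projL_cat L N x : projL (L ++ N) x = projL L x + projL N x.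
Proof. by rewrite /projL big_cat. Qed.

Lemma Sp_catl L N : ortho (L ++ N) -> Sp L `<=` Sp (L ++ N).
Proof.
move=> o x hx; rewrite /Sp /= projL_cat hx /projL big_seq big1 ?addr0 // => v hv.
by rewrite (SpL_N _ _ _ _ o hx hv) scale0r.
Qed.
Lemma Sp_catr L N : ortho (L ++ N) -> Sp N `<=` Sp (L ++ N).
Proof.
move=> o x hx; rewrite /Sp /= projL_cat hx /projL big_seq big1 ?add0r // => v hv.
by rewrite (SpN_L _ _ _ _ o hx hv) scale0r.
Qed.

Lemma Sp_nil x : Sp [::] x -> x = 0.
Proof. by rewrite /Sp /= /projL big_nil => <-. Qed.


Lemma projL_perp L x v : ortho L -> v \in L -> ip (x - projL L x) v = 0.
Proof. by move=> o hv; rewrite ipBl // ip_projL // subrr. Qed.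

Lemma Sp_projL L x : ortho L -> Sp L (projL L x).
Proof.
move=> o; rewrite Sp_lspan //; exact: lspan_list.
Qed.

Lemma projL_perpSp L x y : ortho L -> Sp L y -> ip (x - projL L x) y = 0.
Proof.
move=> o; rewrite Sp_lspan // => hy; rewrite ipC //; apply: perp_lspan hy => v hv.
by rewrite ipC // projL_perp.
Qed.

Lemma projL_bessel L x : ortho L ->
  ip (x - projL L x) (x - projL L x) <= ip x x.
Proof.
move=> o; have h := projL_perpSp _ x _ o (Sp_projL _ x o).
have e2 : ip x x = ip (x - projL L x) (x - projL L x) + ip (projL L x) (projL L x).
  by rewrite -pythag // subrK.
by rewrite e2 lerDl ip_ge0.
Qed.



Lemma closure_near (A : set H) x : closure A x ->
  forall e : R, 0 < e -> exists z, A z /\ `|x - z| < e.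
Proof.
move=> cx e he; have [z [Az bz]] := cx _ (nbhsx_ballx x e he).
by exists z; split => //; move: bz; rewrite -ball_normE.
Qed.

Lemma near_closure (A : set H) x :
  (forall e : R, 0 < e -> exists z, A z /\ `|x - z| < e) -> closure A x.
Proof.
move=> h B /nbhs_ballP [e he sB]; have [z [Az xz]] := h e he.
by exists z; split => //; apply: sB; rewrite -ball_normE.
Qed.

Lemma norm_le_ip x y : ip x x <= ip y y -> `|x| <= `|y|.
Proof. by move=> h; rewrite -ler_sqr ?nnegrE // !norm2. Qed.

Variable M0 : set H.
Hypothesis hM0 : closed_subspace M0.

Definition Fs (L : seq H) :=
  [set x | exists a e, perp ip M0 a /\ Sp L e /\ x = a + e].

Lemma M0_sub : Defs.subspace M0. Proof. by case: hM0. Qed.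
Lemma M0_closed : closed M0. Proof. by case: hM0. Qed.

Lemma perp_subspace : Defs.subspace (perp ip M0).
Proof.
rewrite /Defs.subspace /perp /=; split.
- by move=> y _; rewrite ip0l.
- by move=> x y hx hy z hz; rewrite ipDl hx ?hy ?addr0.
- by move=> a x hx z hz; rewrite ipZl hx ?mulr0.
Qed.

Lemma Fs_subspace L : Defs.subspace (Fs L).
Proof.
have [p0 pD pZ] := perp_subspace; have [s0 sD sZ] := Sp_subspace L.
rewrite /Defs.subspace /Fs /=; split.
- by exists 0, 0; split => //; rewrite addr0.
- move=> x y [a [e [ha [he ->]]]] [a' [e' [ha' [he' ->]]]].
  exists (a + a'), (e + e'); split; first exact: pD.
  by split; [exact: sD | rewrite addrACA].
- move=> c x [a [e [ha [he ->]]]]; exists (c *: a), (c *: e).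
  by split; [exact: pZ| split; [exact: sZ | rewrite scalerDr]].
Qed.

Lemma projL_perpM0 L a : (forall u, u \in L -> M0 u) -> perp ip M0 a -> projL L a = 0.
Proof.
move=> hL ha; rewrite /projL big_seq big1 // => u hu.
by rewrite ha ?scale0r //; apply: hL.
Qed.

Lemma Fs_closed L : ortho L -> (forall u, u \in L -> M0 u) -> closed (Fs L).
Proof.
move=> o hL x cx; exists (x - projL L x), (projL L x).
split; last by split; [exact: Sp_projL | rewrite subrK].
move=> m Mm.
set g := fun w => ip (w - projL L w) m.
have gF z : Fs L z -> g z = 0.
  move=> [a [e [ha [he ->]]]]; rewrite /g projLD he projL_perpM0 // add0r.
  by rewrite addrK ha.
have gB w z : g (w - z) = g w - g z.
  rewrite /g projLB -ipBl; congr (ip _ m).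
  by rewrite !opprB addrACA [RHS]addrACA (addrC (- z)).
have gb w : `|g w| <= `|w| * `|m|.
  apply: le_trans (CS _ _) _; apply: ler_wpM2r => //.
  exact/norm_le_ip/projL_bessel.
rewrite -/(g x); apply/eqP; apply/negPn/negP => gx0.
have hp : 0 < `|g x| by rewrite normr_gt0.
have hm : 0 < `|m| + 1 by rewrite ltr_wpDl.
have [z [Fz xz]] := closure_near _ _ cx _ (divr_gt0 hp hm).
have := gb (x - z); rewrite gB (gF z Fz) subr0 => h.
have : `|x - z| * `|m| < `|g x|.
  rewrite ltr_pdivlMr // in xz.
  apply: le_lt_trans xz; apply: ler_wpM2l => //; lra.
lra.
Qed.

Lemma natinv (e : R) : 0 < e -> exists N, forall n, (N <= n)%N -> n.+1%:R^-1 < e.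
Proof.
move=> he; have [N _ HN] := @near_infty_natSinv_lt R (PosNum he).
by exists N => n hn; apply: HN.
Qed.
Lemma ev (P : nat -> Prop) : (\forall n \near \oo, P n) -> exists N, forall n, (N <= n)%N -> P n.
Proof. by move=> [N _ HN]; exists N => n hn; apply: HN. Qed.
Lemma ev2 (P : nat -> Prop) N : (forall n, (N <= n)%N -> P n) -> (\forall n \near \oo, P n).
Proof. by move=> h; exists N. Qed.

Lemma norm_lt_ip x (e : R) : 0 <= e -> ip x x < e ^+ 2 -> `|x| < e.
Proof. by move=> he h; rewrite -ltr_sqr ?nnegrE // norm2. Qed.

Lemma parallelogram a b :
  ip (a - b) (a - b) + ip (a + b) (a + b) = 2 * ip a a + 2 * ip b b.
Proof. rewrite ipBl !ipBr ipDl !ipDr (ipC b a). ring. Qed.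

Lemma ip_double c : ip (c + c) (c + c) = 4 * ip c c.
Proof. rewrite ipDl !ipDr. ring. Qed.

Lemma ip_shift w t y :
  ip (w - t *: y) (w - t *: y) = ip w w - 2 * t * ip w y + t ^+ 2 * ip y y.
Proof. rewrite ipBl !ipBr !ipZl !ipZr (ipC y w). ring. Qed.

Lemma normB_le_ip x : `|x| = Num.sqrt (ip x x). Proof. exact: ip_norm. Qed.

Lemma proj_ex x : exists p, M0 p /\ perp ip M0 (x - p).
Proof.
have [S0 SD SZ] := M0_sub.
pose S := [set r | exists m, M0 m /\ r = ip (x - m) (x - m)].
have hS : has_inf S.
  split; first by exists (ip (x - 0) (x - 0)), 0.
  by exists 0 => r [m [_ ->]]; apply: ip_ge0.
set d := inf S.
have dlb m : M0 m -> d <= ip (x - m) (x - m).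
  by move=> hm; apply: (ge_inf hS.2); exists m.
have d0 : 0 <= d by apply: lb_le_inf hS.1 _ => r [m [_ ->]]; apply: ip_ge0.
have hk k : exists m, M0 m /\ ip (x - m) (x - m) < d + k.+1%:R^-1.
  have hk0 : 0 < k.+1%:R^-1 :> R by rewrite invr_gt0.
  have [r [m [hm ->]] hr] := @inf_adherent _ S _ hk0 hS.
  by exists m.
have [m hm] := choice hk.
have cauch j k : ip (m j - m k) (m j - m k) <= 2 * j.+1%:R^-1 + 2 * k.+1%:R^-1.
  have [hj hjd] := hm j; have [hk' hkd] := hm k.
  pose mid := 2^-1 *: (m j + m k).
  have Mmid : M0 mid by apply: SZ; apply: SD.
  have e1 : m j + m k = mid + mid.
    have h2 : (2^-1 + 2^-1 : R) = 1 by field.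
    by rewrite /mid -scalerDl h2 scale1r.
  have e2 : x - m k - (x - m j) = m j - m k.
    by rewrite opprB addrC addrA subrK.
  have e3 : x - m k + (x - m j) = x - mid + (x - mid).
    by rewrite addrACA -opprD [RHS]addrACA -opprD (addrC (m k)) e1.
  have := parallelogram (x - m k) (x - m j); rewrite e2 e3 ip_double.
  move=> hp; have := dlb _ Mmid; move=> hdm.
  move: hp hdm hjd hkd; clearbody mid; set a := (j.+1%:R^-1 : R); set b := (k.+1%:R^-1 : R).
  lra.
have cv : cvg (m @ \oo).
  apply/cauchy_cvgP/cauchy_exP => e he.
  have he2 : 0 < e ^+ 2 / 4 by apply: divr_gt0 => //; apply: exprn_gt0.
  have [K hK] := natinv _ he2.
  exists (m K); apply: (ev2 _ K) => n hn.
  rewrite -ball_normE /=.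
  apply: norm_lt_ip; first exact: ltW.
  apply: le_lt_trans (cauch K n) _.
  have h1 := hK K (leqnn K); have h2 := hK n hn.
  move: h1 h2; set a := (K.+1%:R^-1 : R); set b := (n.+1%:R^-1 : R).
  lra.
set p := lim (m @ \oo).
have Mp : M0 p.
  by apply: (closed_cvg _ M0_closed _ _ cv); apply: nearW => n; case: (hm n).
have dp : ip (x - p) (x - p) <= d.
  apply/ler_addgt0Pr => eta heta.
  set D := `|x - p|.
  have D0 : 0 <= D by rewrite /D normr_ge0.
  have hc : 0 < eta / (2 * (2 * D + 3)) by apply: divr_gt0 => //; lra.
  have [N1 h1] := ev _ ((cvgrPdist_lt _ p).1 cv _ ltr01).
  have [N2 h2] := ev _ ((cvgrPdist_lt _ p).1 cv _ hc).
  have heta2 : 0 < eta / 2 by lra.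
  have [N3 h3] := natinv _ heta2.
  pose n := (N1 + N2 + N3)%N.
  have := h1 n ltac:(rewrite /n; lia); have := h2 n ltac:(rewrite /n; lia).
  have := h3 n ltac:(rewrite /n; lia).
  have [_ hmn] := hm n.
  move=> hn3 hr2 hr1.
  have hq2 : `|x - m n| ^+ 2 = ip (x - m n) (x - m n) by rewrite norm2.
  have hD2 : D ^+ 2 = ip (x - p) (x - p) by rewrite /D norm2.
  have t1 : D <= `|x - m n| + `|p - m n|.
    rewrite /D; have -> : x - p = (x - m n) - (p - m n) by rewrite opprB addrA subrK.
    exact: ler_normB.
  have t2 : `|x - m n| <= D + `|p - m n|.
    rewrite /D; have -> : x - m n = (x - p) + (p - m n) by rewrite addrA subrK.
    exact: ler_normD.
  rewrite -hD2 -hq2 in hmn *.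
  move: hn3 hr2 hr1 t1 t2 hmn hc.
  set r := `|p - m n|; set q := `|x - m n|; set a := (n.+1%:R^-1 : R).
  have r0 : 0 <= r by rewrite /r normr_ge0.
  have q0 : 0 <= q by rewrite /q normr_ge0.
  set c := eta / (2 * (2 * D + 3)).
  have hcD : c * (2 * D + 3) = eta / 2 by rewrite /c; field; lra.
  move=> hn3 hr2 hr1 t1 t2 hmn hc.
  have s1 : D ^+ 2 <= (q + r) ^+ 2 by rewrite ler_sqr ?nnegrE // addr_ge0.
  have s2 : (q + r) ^+ 2 <= q ^+ 2 + r * (2 * D + 3) by nra.
  have s3 : r * (2 * D + 3) <= eta / 2 by nra.
  lra.
exists p; split => // y My.
set c := ip (x - p) y; set qy := ip y y.
have key t : d <= ip (x - p) (x - p) - 2 * t * c + t ^+ 2 * qy.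
  have := dlb _ (SD _ _ Mp (SZ t _ My)).
  by rewrite opprD addrA ip_shift.
have hq : 0 <= qy by apply: ip_ge0.
set s := (qy + 1)^-1.
have hs0 : 0 < s by rewrite /s invr_gt0; lra.
have hs : s * qy = 1 - s by rewrite /s; field; lra.
have h := key (c * s).
have h' : 2 * (c * s) * c <= c ^+ 2 * s * (1 - s).
  have e : (c * s) ^+ 2 * qy = c ^+ 2 * s * (s * qy) by ring.
  rewrite e hs in h; lra.
have h2 : c ^+ 2 * (s * (1 + s)) <= 0 by nra.
have h3 : 0 < s * (1 + s) by nra.
have h4 : c ^+ 2 = 0.
  have : c ^+ 2 <= 0 by nra.
  have := sqr_ge0 c; lra.
by apply/eqP; rewrite -sqrf_eq0; apply/eqP.
Qed.

Lemma ortho_snoc L u : ortho L -> (forall v, v \in L -> ip u v = 0) -> ip u u = 1 ->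
  ortho (L ++ [:: u]).
Proof.
move=> [uL oL] hu hu1.
have nu : u \notin L.
  by apply/negP => uin; move: (hu u uin); rewrite hu1 => /eqP; rewrite oner_eq0.
split; first by rewrite cat_uniq uL /=; move: nu; case: (u \in L).
move=> a b; rewrite !mem_cat !mem_seq1 => /orP[ha|/eqP->] /orP[hb|/eqP->].
- exact: oL.
- have : a != u by apply/negP => /eqP e; move: nu; rewrite -e ha.
  by move=> /negbTE ->; rewrite ipC hu.
- have : u != b by apply/negP => /eqP e; move: nu; rewrite e hb.
  by move=> /negbTE ->; rewrite hu.
- by rewrite eqxx hu1.
Qed.

Lemma Sp_M0 L : ortho L -> (forall u, u \in L -> M0 u) -> Sp L `<=` M0.
Proof. by move=> o hL; apply: Sp_sub => //; apply: M0_sub. Qed.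

Lemma gs1 L w : ortho L -> (forall u, u \in L -> M0 u) -> M0 w ->
  exists N, [/\ ortho (L ++ N), (forall u, u \in N -> M0 u), Sp (L ++ N) w &
    (N = [::] -> Sp L w)].
Proof.
move=> o hL hw; have [S0 SD SZ] := M0_sub.
set p := projL L w; set r := w - p.
have Mp : M0 p by apply: (Sp_M0 _ o hL); apply: Sp_projL.
have Mr : M0 r by rewrite /r -scaleN1r; apply: SD => //; apply: SZ.
have [r0|rn0] := eqVneq r 0.
  have hw' : Sp L w by rewrite /Sp /= -/p; apply/eqP; rewrite eq_sym -subr_eq0 -/r r0.
  by exists [::]; rewrite cats0.
have nr : 0 < `|r| by rewrite normr_gt0.
set u := `|r|^-1 *: r.
have hrv v : v \in L -> ip r v = 0 by move=> hv; rewrite /r projL_perp.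
have hu v : v \in L -> ip u v = 0 by move=> hv; rewrite /u ipZl hrv // mulr0.
have hrr : ip r r = `|r| ^+ 2 by rewrite norm2.
have hu1 : ip u u = 1.
  rewrite /u ipZl ipZr hrr; field; lra.
have o' := ortho_snoc _ _ o hu hu1.
exists [:: u]; split => //.
- by move=> v; rewrite mem_seq1 => /eqP ->; apply: SZ.
- rewrite /Sp /= projL_cat -/p /projL big_seq1.
  have hpu : ip p u = 0.
    apply: (SpL_N _ _ _ _ o' (Sp_projL _ _ o)); exact: mem_head.
  have -> : ip w u = `|r|.
    have -> : w = r + p by rewrite /r subrK.
    rewrite ipDl hpu addr0 /u ipZr hrr; field; lra.
  rewrite /u scalerA mulfV ?scale1r; last by rewrite gt_eqF.
  by rewrite /r addrC subrK.
Qed.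

Lemma steps_W (L W : seq H) : ortho L -> (forall u, u \in L -> M0 u) -> (forall w, w \in W -> M0 w) ->
  exists N, [/\ ortho (L ++ N), (forall u, u \in N -> M0 u) &
                forall w, w \in W -> Sp (L ++ N) w].
Proof.
elim: W L => [|w W IH] L o hL hW.
  by exists [::]; rewrite cats0; split.
have [N1 [ob1 h1 s1 ?]] := gs1 _ _ o hL (hW w (mem_head _ _)).
have hL1 : forall u, u \in L ++ N1 -> M0 u.
  by move=> u; rewrite mem_cat => /orP[]; [apply: hL | apply: h1].
have [N2 [ob2 h2 s2]] := IH _ ob1 hL1 (fun v hv => hW v (@mem_behead _ (w :: W) v hv)).
exists (N1 ++ N2); rewrite catA; split => //.
  by move=> u; rewrite mem_cat => /orP[]; [apply: h1 | apply: h2].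
move=> v; rewrite in_cons => /orP[/eqP->|hv]; last exact: s2.
exact: (Sp_catl _ _ ob2).
Qed.

Hypothesis hinf : infinite_dim M0.

Lemma step_ex (L W : seq H) : ortho L -> (forall u, u \in L -> M0 u) -> (forall w, w \in W -> M0 w) ->
  exists N, [/\ ortho (L ++ N), (forall u, u \in N -> M0 u), N != [::] &
                forall w, w \in W -> Sp (L ++ N) w].
Proof.
move=> o hL hW; have [N1 [ob1 h1 s1]] := steps_W _ _ o hL hW.
have hL1 : forall u, u \in L ++ N1 -> M0 u.
  by move=> u; rewrite mem_cat => /orP[]; [apply: hL | apply: h1].
have [z [Mz nz]] : exists z, M0 z /\ ~ Sp (L ++ N1) z.
  apply: contrapT => hn; apply: hinf; exists (L ++ N1) => z Mz.
  rewrite -Sp_lspan //; apply: contrapT => nz; apply: hn; by exists z.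
have [N2 [ob2 h2 s2 e2]] := gs1 _ _ ob1 hL1 Mz.
exists (N1 ++ N2); rewrite catA; split => //.
- by move=> u; rewrite mem_cat => /orP[]; [apply: h1 | apply: h2].
- apply/eqP => e; case: nz; apply: e2; apply/nilP.
  by move: (f_equal size e); rewrite size_cat => /eqP; rewrite addn_eq0 => /andP[].
- by move=> w hw; apply: (Sp_catl _ _ ob2); apply: s1.
Qed.

Lemma Fs_perp L x : ortho L -> (forall u, u \in L -> M0 u) -> Fs L x ->
  (forall a, perp ip M0 a -> ip x a = 0) -> Sp L x.
Proof.
move=> o hL [a [e [ha [he ->]]]] hx.
have Me : M0 e by apply: (Sp_M0 _ o hL).
have : ip (a + e) a = 0 by apply: hx.
rewrite ipDl (ipC e) (ha e Me) addr0 => /ip_eq0 ->.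
by rewrite add0r.
Qed.

Lemma perp_Fs L a : perp ip M0 a -> Fs L a.
Proof.
move=> ha; exists a, 0; split => //; split; last by rewrite addr0.
exact: projL0.
Qed.

Lemma Sp_Fs L e : Sp L e -> Fs L e.
Proof.
move=> he; exists 0, e; split; last by rewrite add0r.
by move=> y _; rewrite ip0l.
Qed.

Lemma incr L N : ortho (L ++ N) -> (forall u, u \in L ++ N -> M0 u) ->
  Fs (L ++ N) `&` perp ip (Fs L) = Sp N.
Proof.
move=> o hLN.
have oL := ortho_catl _ _ o; have oN := ortho_catr _ _ o.
have hL u : u \in L -> M0 u by move=> hu; apply: hLN; rewrite mem_cat hu.
have hN u : u \in N -> M0 u by move=> hu; apply: hLN; rewrite mem_cat hu orbT.
apply/seteqP; split => x.
  move=> [hx hp].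
  have sx : Sp (L ++ N) x.
    by apply: (Fs_perp _ _ o hLN hx) => a ha; apply: hp; apply: perp_Fs.
  have hpl : projL L x = 0.
    rewrite /projL big_seq big1 // => v hv.
    rewrite hp ?scale0r //; apply: Sp_Fs; rewrite /Sp /= projL_mem //.
  by move: sx; rewrite /Sp /= projL_cat hpl add0r.
move=> hx; split.
  by apply: Sp_Fs; apply: (Sp_catr _ _ o).
move=> y [a [e [ha [he ->]]]].
have Mx : M0 x by apply: (Sp_M0 _ oN hN).
rewrite ipDr ipC ha // add0r ipC.
exact: (Sp_ortho _ _ _ _ o he hx).
Qed.

Lemma proj_contract (P : H -> H) m d : M0 m -> M0 (P d) -> perp ip M0 (d - P d) ->
  `|m - P d| <= `|m - d|.
Proof.
move=> Mm MP hp; apply: norm_le_ip.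
have [S0 SD SZ] := M0_sub.
have e : m - d = (m - P d) + (P d - d) by rewrite addrA subrK.
have h0 : ip (m - P d) (P d - d) = 0.
  have -> : P d - d = - (d - P d) by rewrite opprB.
  rewrite ipNr ipC hp ?oppr0 //.
  by rewrite -scaleN1r; apply: SD => //; apply: SZ.
by rewrite e (pythag _ _ h0) lerDl ip_ge0.
Qed.

Lemma main_constr (N : H -> R) : separable (H := H) -> measurable_norm ip N ->
  exists F : nat -> set H,
    [/\ F 0%N = perp ip M0,
        measurably_adapted ip N F,
        F 0%N `<=` F 1%N,
        finite_dim (F 1%N `&` M0) &
        closure (lspan (\bigcup_(n in [set n | (1 <= n)%N])
                         (F n `&` perp ip (F n.-1)))) = M0].
Proof.
move=> [D [cD dD]] [isN hm].
have [f hf] : exists f : nat -> H, D `<=` range f.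
  case/pfcard_geP: cD => [D0|/surjfunPex [g hg]].
    have : closure D 0 by rewrite dD.
    by rewrite D0 closure0.
  by exists g; rewrite hg => x [n _ <-]; exists n.
have [P hP] := choice proj_ex.
have hG k : exists G : set H, Defs.subspace G /\ finite_dim G /\
    forall F1 : set H, Defs.subspace F1 -> finite_dim F1 -> Defs.orthogonal ip F1 G ->
      (Gauss ip F1 [set v | (N v > 2 ^- k)%R] < (2 ^- k : R)%:E)%E.
  by apply: hm; rewrite invr_gt0 exprn_gt0.
have [G hG'] := choice hG.
have hs k : exists s : seq H, G k `<=` lspan [set x | x \in s].
  by case: (hG' k) => _ [].
have [s hs'] := choice hs.
have hst (LW : seq H * seq H) : exists Nn : seq H,
    (ortho LW.1 /\ (forall u, u \in LW.1 -> M0 u) /\ (forall w, w \in LW.2 -> M0 w)) ->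
    [/\ ortho (LW.1 ++ Nn), (forall u, u \in Nn -> M0 u), Nn != [::] &
        forall w, w \in LW.2 -> Sp (LW.1 ++ Nn) w].
  case: (pselect (ortho LW.1 /\ (forall u, u \in LW.1 -> M0 u) /\
                  (forall w, w \in LW.2 -> M0 w))) => [[ob [hL hW]]|nh];
    last by exists [::].
  by have [Nn hN] := step_ex _ _ ob hL hW; exists Nn.
have [stp hstp] := choice hst.
pose W n := P (f n) :: map P (s n.+1).
pose E := fix E n := if n is m.+1 then E m ++ stp (E m, W m) else [::].
pose nw n := stp (E n, W n).
have hW n : forall w, w \in W n -> M0 w.
  by move=> w; rewrite in_cons => /orP[/eqP->|/mapP[y _ ->]]; [case: (hP (f n)) | case: (hP y)].
have inv n : ortho (E n) /\ (forall u, u \in E n -> M0 u).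
  elim: n => [|n [ob hL]]; first by split => //; split.
  have [ob' hN _ _] := hstp (E n, W n) (conj ob (conj hL (hW n))).
  split => // u; rewrite /= mem_cat => /orP[]; [exact: hL | exact: hN].
have props n : [/\ ortho (E n ++ nw n), (forall u, u \in nw n -> M0 u), nw n != [::] &
        forall w, w \in W n -> Sp (E n ++ nw n) w].
  by case: (inv n) => ob hL; apply: (hstp (E n, W n)); split => //; split => //; apply: hW.
pose F n := Fs (E n).
have hLN n : forall u, u \in E n ++ nw n -> M0 u.
  by move=> u; rewrite mem_cat => /orP[]; [apply: (inv n).2 | move=> hu; case: (props n) => _ h _ _; exact: h].
have hinc n : F n.+1 `&` perp ip (F n) = Sp (nw n).
  by case: (props n) => ob _ _ _; exact: (incr _ _ ob (hLN n)).
have EU n : forall u, u \in E n ->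
    (\bigcup_(n in [set n | (1 <= n)%N]) (F n `&` perp ip (F n.-1))) u.
  elim: n => [//|n IH] u; rewrite /= mem_cat => /orP[/IH //|hu].
  exists n.+1 => //; suff : (F n.+1 `&` perp ip (F n)) u by []; rewrite hinc.
  by case: (props n) => ob _ _ _; rewrite /Sp /= projL_mem //; exact: ortho_catr ob.
exists F; split.
- apply/seteqP; split => x.
    by move=> [a [e [ha [he ->]]]]; rewrite (Sp_nil e he) addr0.
  by move=> hx; apply: perp_Fs.
- split.
  + move=> n _; split; first exact: Fs_subspace.
    by case: (inv n) => ob hL; apply: Fs_closed.
  + move=> n _ x [a [e [ha [he ->]]]]; exists a, e; split => //; split => //.
    by case: (props n) => ob _ _ _; exact: (Sp_catl _ _ ob).
  + move=> n _; case: (props n) => ob hN nn sW.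
    have oN := ortho_catr _ _ ob.
    split; last by rewrite hinc; exists (nw n); rewrite -Sp_lspan.
    case E1 : (nw n) nn => [//|u r] _.
    have hu : Sp (nw n) u by rewrite /Sp /= projL_mem // E1 mem_head.
    rewrite -hinc in hu; case: hu => hu1 hu2; exists u; split => //; split => //.
    apply/eqP => u0; case: oN => _ /(_ u u); rewrite E1 mem_head eqxx => /(_ isT isT).
    by rewrite u0 ip0l => /eqP; rewrite eq_sym oner_eq0.
  + apply/seteqP; split => // x _.
    have : closure D x by rewrite dD.
    apply: closureS => d /hf [k _ <-]; exists k.+1 => //.
    exists (f k - P (f k)), (P (f k)); split; first by case: (hP (f k)).
    split; last by rewrite subrK.
    by case: (props k) => _ _ _; apply; apply: mem_head.
  + move=> n hn; rewrite hinc.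
    have [_ [_ hGp]] := hG' n; apply: hGp.
    * exact: Sp_subspace.
    * by case: (props n) => ob _ _ _; exists (nw n); rewrite -Sp_lspan //; exact: ortho_catr ob.
    * case: (props n) => ob hN _ _; have oN := ortho_catr _ _ ob.
      move=> x g hx hg; rewrite ipC; apply: (perp_lspan _ _ _ _ (hs' n g hg)) => v hv.
      have Mx : M0 x by apply: (Sp_M0 _ oN hN).
      have -> : v = (v - P v) + P v by rewrite subrK.
      rewrite ipDl; case: (hP v) => _ ->; rewrite // add0r.
      have [m em] : exists m, n = m.+1 by case: n hn {hG' ob hN hx oN hg hv} => // m; exists m.
      subst n; apply: (Sp_ortho _ _ _ _ ob _ hx).
      case: (props m) => _ _ _; apply.
      by rewrite /W in_cons; apply/orP; right; apply/mapP; exists v.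
- by move=> x [a [e [ha [he ->]]]]; rewrite (Sp_nil e he) addr0; apply: perp_Fs.
- exists (E 1%N) => x [hx Mx]; case: (inv 1%N) => ob hL.
  rewrite -Sp_lspan //; apply: (Fs_perp _ _ ob hL hx) => a ha.
  by rewrite ipC; apply: ha.
- apply/seteqP; split.
    have sub : lspan (\bigcup_(n in [set n | (1 <= n)%N]) (F n `&` perp ip (F n.-1)))
               `<=` M0.
      apply: lspan_sub; first exact: M0_sub.
      move=> x [n _ [hx hp]]; case: (inv n) => ob hL.
      apply: (Sp_M0 _ ob hL); apply: (Fs_perp _ _ ob hL hx) => a ha.
      by apply: hp; apply: perp_Fs.
    by move=> x cx; apply: M0_closed; exact: (closureS sub cx).
  move=> m Mm; apply: near_closure => e he.
  have cm : closure D m by rewrite dD.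
  have [d [Dd hd]] := closure_near _ _ cm _ he.
  have [k _ dk] := hf d Dd.
  exists (P d); split; last first.
    by apply: le_lt_trans hd; case: (hP d) => h1 h2; apply: proj_contract.
  have : Sp (E k.+1) (P d).
    by rewrite -dk; case: (props k) => _ _ _; apply; apply: mem_head.
  case: (inv k.+1) => ob hL; rewrite Sp_lspan //; apply: lspan_mono.
  by move=> u; apply: EU.
Qed.
End Basics.

Theorem lemma2p1 (R : realType) (H : completeNormedModType R)
  (ip : H -> H -> R) (N : H -> R) (M0 : set H) :
  is_inner_product ip -> separable (H := H) -> infinite_dim (@setT H) ->
  measurable_norm ip N ->
  closed_subspace M0 -> infinite_dim M0 ->
  exists F : nat -> set H,
    [/\ F 0%N = perp ip M0,
        measurably_adapted ip N F,
        F 0%N `<=` F 1%N,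
        finite_dim (F 1%N `&` M0) &
        closure (lspan (\bigcup_(n in [set n | (1 <= n)%N])
                         (F n `&` perp ip (F n.-1)))) = M0].
Proof.
move=> hip hsep _ hmeas hM0 hinf.
exact: (@main_constr R H ip hip M0 hM0 hinf N hsep hmeas).
Qed.
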